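(* Let $d\ge2$, $b:=2^d$, $N\in\mathbb{N}$, $L:=\min\{\ell\ge0:b^\ell\ge N\}$, and assume $L\ge3$. Then \[ S_{L-2}\le\frac{2^{d-1}}{2^{d-1}-1}\,2^{-L}\le2\cdot2^{-L}. \]
   Context: For $0\le\ell\le L-3$: $\Delta_\ell:=\frac{2^{2d-3}}{N}2^{\ell(d-1)}$, $S_0:=0$, $S_{\ell+1}:=S_\ell+\Delta_\ell$; thus $S_{L-2}=\sum_{\ell=0}^{L-3}\Delta_\ell$. *)

(* Defs.v *)
From mathcomp Require Import all_boot all_order all_algebra.
Set Implicit Arguments. Unset Strict Implicit. Unset Printing Implicit Defensive.
Import Order.TTheory GRing.Theory Num.Theory.
Local Open Scope ring_scope.

Definition Delta (R : realFieldType) (d N l : nat) : R :=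
  (2%:R ^+ (2 * d - 3)) / N%:R * 2%:R ^+ (l * (d - 1)).

Fixpoint S (R : realFieldType) (d N l : nat) : R :=
  match l with
  | 0 => 0
  | l'.+1 => S R d N l' + Delta R d N l'
  end.

(* Main.v *)
Require Import Defs.
From mathcomp Require Import all_boot all_order all_algebra.
From mathcomp Require Import ring lra zify.
Import Order.TTheory GRing.Theory Num.Theory.
Local Open Scope ring_scope.

Lemma S_closed (R : realFieldType) d N k :
  S R d N k * (2%:R ^+ (d - 1) - 1) =
  (2%:R ^+ (2 * d - 3)) / N%:R * ((2%:R ^+ (d - 1)) ^+ k - 1).
Proof.
elim: k => [|k IH] /=; first by rewrite expr0 subrr !mul0r mulr0.
rewrite mulrDl IH /Delta (mulnC k) exprM exprS; ring.
Qed.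

Theorem lemma2p10 (R : realFieldType) (d N L : nat)
  (hd : (2 <= d)%N)
  (hLge : (N <= (2 ^ d) ^ L)%N)
  (hLmin : forall l : nat, (N <= (2 ^ d) ^ l)%N -> (L <= l)%N)
  (hL3 : (3 <= L)%N) :
  S R d N (L - 2) <=
    (2%:R ^+ (d - 1)) / (2%:R ^+ (d - 1) - 1) * (2%:R ^+ L)^-1
  /\ (2%:R ^+ (d - 1)) / (2%:R ^+ (d - 1) - 1) * (2%:R ^+ L)^-1
     <= 2%:R * (2%:R ^+ L)^-1 :> R.
Proof.
have hN : ((2 ^ d) ^ (L - 1) < N)%N.
  rewrite ltnNge; apply/negP => /hLmin; lia.
have hNR : (2%:R ^+ (d * (L - 1)) < N%:R :> R).
  by rewrite -natrX ltr_nat expnM.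
have q2 : (2 <= 2%:R ^+ (d - 1) :> R).
  have -> : (d - 1 = (d - 2).+1)%N by lia.
  rewrite exprS; have := exprn_ege1 (d - 2) (ler1n R 2); lra.
set q := 2%:R ^+ (d - 1) in q2 *.
have hL : (0 < 2%:R ^+ L :> R) by rewrite exprn_gt0.
have hq1 : 0 < q - 1 by lra.
split; last first.
  rewrite ler_pM2r ?invr_gt0 // ler_pdivrMr //; lra.
have N0 : (0 < N%:R :> R) by apply: le_lt_trans hNR; rewrite exprn_ge0.
pose c := (2%:R : R) ^+ (2 * d - 3).
pose P := q ^+ (L - 2).
have c0 : 0 <= c / N%:R by rewrite divr_ge0 // exprn_ge0.
have E : c * P * 2%:R ^+ L = q * 2%:R ^+ (d * (L - 1)).
  rewrite /c /P /q -exprM -!exprD; congr (_ ^+ _).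
  clear -hd hL3; move: hd hL3; case: d => [|[|D]] //; case: L => [|[|[|K]]] // _ _; have -> : (2 * D.+2 - 3 = 2 * D + 1)%N by lia.
  rewrite !subSS !subn0 !mulSn !mulnS; lia.
have key : c / N%:R * P <= q * (2%:R ^+ L)^-1.
  rewrite ler_pdivlMr //.
  have -> : c / N%:R * P * 2%:R ^+ L = (c * P * 2%:R ^+ L) / N%:R by ring.
  rewrite E ler_pdivrMr // ler_pM2l; last lra.
  exact: ltW.
have Sc := S_closed R d N (L - 2).
have -> : S R d N (L - 2) = c / N%:R * (P - 1) / (q - 1).
  rewrite -Sc mulfK //; exact: lt0r_neq0.
rewrite [q / (q - 1) * _]mulrAC ler_pM2r ?invr_gt0 //.
rewrite mulrBr mulr1; apply: le_trans key; rewrite lerBlDr lerDl //.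
Qed.
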